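(* Let $\mathcal{G}=\langle\mathcal{Q},\mathbf{f}\rangle$ be a real NEP satisfying Assumptions 1 and 2, and let $\alpha_i^{\min},\beta_{ij}^{\max}$ be computed with $\mathbf{C}_i=\mathbf{I}$ for all $i$. Set $\bar\tau=\max_{1\le i\le I}\{\sum_{j\ne i}\beta_{ij}^{\max}-\alpha_i^{\min}\}$. Then for every $\mathbf{y}\in\mathbb{R}^n$ and every $\tau>\bar\tau$, the game $\mathcal{G}_{\tau,\mathbf{y}}$, in which player $i$ minimizes $f_i(\mathbf{x}_i,\mathbf{x}_{-i})+\frac{\tau}{2}\|\mathbf{x}_i-\mathbf{y}_i\|^2$ over $\mathbf{x}_i\in\mathcal{Q}_i$, is a P$_{\boldsymbol{\Upsilon}}$ NEP.
   Context: Real NEP: player $i$ chooses $\mathbf{x}_i\in\mathcal{Q}_i\subseteq\mathbb{R}^{n_i}$, $n=\sum_in_i$, $\mathcal{Q}=\prod_i\mathcal{Q}_i$, $\mathbf{y}=(\mathbf{y}_i)_i$ with $\mathbf{y}_i\in\mathbb{R}^{n_i}$. Assumption 1: each $\mathcal{Q}_i$ nonempty closed convex; each $f_i$ continuously differentiable on $\mathcal{Q}$ and convex in $\mathbf{x}_i$ for fixed $\mathbf{x}_{-i}$. Assumption 2: each $f_i$ twice continuously differentiable with bounded derivatives on $\mathcal{Q}$. $\mathbf{F}_i=\nabla_{\mathbf{x}_i}f_i$; $\alpha_i^{\min}=\inf_{\mathbf{x}\in\mathcal{Q}}\lambda_{\rm least}(\mathbf{C}_i^T\mathbf{J}_i\mathbf{F}_i(\mathbf{x})\mathbf{C}_i)$,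 $\beta_{ij}^{\max}=\sup_{\mathbf{x}\in\mathcal{Q}}\|\mathbf{C}_i^T\mathbf{J}_j\mathbf{F}_i(\mathbf{x})\mathbf{C}_j\|_2$, where $\mathbf{J}_j\mathbf{F}_i$ is the Jacobian w.r.t. $\mathbf{x}_j$ and $\lambda_{\rm least}(\mathbf{A})$ the smallest eigenvalue of $(\mathbf{A}+\mathbf{A}^T)/2$. $\boldsymbol{\Upsilon}$ of a game is the $I\times I$ matrix with diagonal $\alpha_i^{\min}$, off-diagonal $-\beta_{ij}^{\max}$ computed from that game's gradient map. A game is a P$_{\boldsymbol{\Upsilon}}$ NEP if it satisfies Assumptions 1 and 2 and its $\boldsymbol{\Upsilon}$ is a P-matrix (all principal minors positive). *)

(* Defs.v *)
From Stdlib Require Import Reals Lra List.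
Open Scope R_scope.

(** A vector of R^m is
  represented as [vec := nat -> R], only coordinates k < m being meaningful;
  a strategy profile is [prof := nat -> nat -> R], [x i k] being coordinate k
  of x_i.  All metric notions below only read meaningful coordinates, so the
  topology is the Euclidean one on R^n, n = sum_i d i. *)

Definition vec := nat -> R.
Definition prof := nat -> nat -> R.
Definition mat := nat -> nat -> R.

Fixpoint sumR (n : nat) (g : nat -> R) : R :=
  match n with O => 0 | S m => sumR m g + g m end.

Definition vnorm2 (m : nat) (v : vec) : R := sumR m (fun k => (v k) ^ 2).
Definition vnorm (m : nat) (v : vec) : R := sqrt (vnorm2 m v).
Definition vdist (m : nat) (v w : vec) : R := vnorm m (fun k => v k - w k).

Definition pnorm2 (I : nat) (d : nat -> nat) (x : prof) : R :=
  sumR I (fun i => vnorm2 (d i) (x i)).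
Definition pdist (I : nat) (d : nat -> nat) (x y : prof) : R :=
  sqrt (pnorm2 I d (fun i k => x i k - y i k)).

Definition open_set (I : nat) (d : nat -> nat) (U : prof -> Prop) : Prop :=
  forall x, U x -> exists e, 0 < e /\ forall y, pdist I d x y < e -> U y.

Definition closed_vset (m : nat) (S : vec -> Prop) : Prop :=
  forall v, ~ S v -> exists e, 0 < e /\ forall w, vdist m v w < e -> ~ S w.

Definition convex_vset (S : vec -> Prop) : Prop :=
  forall v w t, S v -> S w -> 0 <= t <= 1 ->
    S (fun k => t * v k + (1 - t) * w k).

Definition cont_on (I : nat) (d : nat -> nat) (g : prof -> R)
    (U : prof -> Prop) : Prop :=
  forall x, U x -> forall e, 0 < e -> exists del, 0 < del /\
    forall y, U y -> pdist I d x y < del -> Rabs (g y - g x) < e.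

Definition upd (x : prof) (i k : nat) (h : R) : prof :=
  fun j l => if andb (Nat.eqb j i) (Nat.eqb l k) then x j l + h else x j l.

Definition has_partial (g : prof -> R) (x : prof) (i k : nat) (L : R) : Prop :=
  derivable_pt_lim (fun h => g (upd x i k h)) 0 L.

Definition C1_on (I : nat) (d : nat -> nat) (U : prof -> Prop)
    (g : prof -> R) (Dg : nat -> nat -> prof -> R) : Prop :=
  cont_on I d g U /\
  (forall i k, (i < I)%nat -> (k < d i)%nat ->
     (forall x, U x -> has_partial g x i k (Dg i k x)) /\
     cont_on I d (Dg i k) U).

(** g is C^2 on U, with first partials Dg i k and second partials
    D2g i k j l = d/dx_{j,l} (d g / dx_{i,k}) *)
Definition C2_on (I : nat) (d : nat -> nat) (U : prof -> Prop)
    (g : prof -> R) (Dg : nat -> nat -> prof -> R)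
    (D2g : nat -> nat -> nat -> nat -> prof -> R) : Prop :=
  C1_on I d U g Dg /\
  (forall i k, (i < I)%nat -> (k < d i)%nat -> C1_on I d U (Dg i k) (D2g i k)).

Definition inQ (I : nat) (Q : nat -> vec -> Prop) (x : prof) : Prop :=
  forall i, (i < I)%nat -> Q i (x i).

Definition setblock (x : prof) (i : nat) (v : vec) : prof :=
  fun j => if Nat.eqb j i then v else x j.

Definition Assumption1 (I : nat) (d : nat -> nat) (Q : nat -> vec -> Prop)
    (f : nat -> prof -> R) : Prop :=
  (forall i, (i < I)%nat ->
     (exists v, Q i v) /\ closed_vset (d i) (Q i) /\ convex_vset (Q i)) /\
  (exists (U : prof -> Prop) (D : nat -> nat -> nat -> prof -> R),
     open_set I d U /\ (forall x, inQ I Q x -> U x) /\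
     forall p, (p < I)%nat -> C1_on I d U (f p) (D p)) /\
  (forall i, (i < I)%nat -> forall x, inQ I Q x -> forall v w t,
     Q i v -> Q i w -> 0 <= t <= 1 ->
     f i (setblock x i (fun k => t * v k + (1 - t) * w k))
       <= t * f i (setblock x i v) + (1 - t) * f i (setblock x i w)).

(** second-order data of the game on an open neighbourhood U of Q;
    D2 p i k j l x = d^2 f_p / dx_{j,l} dx_{i,k} (x) *)
Definition Hess_data (I : nat) (d : nat -> nat) (Q : nat -> vec -> Prop)
    (f : nat -> prof -> R) (U : prof -> Prop)
    (D : nat -> nat -> nat -> prof -> R)
    (D2 : nat -> nat -> nat -> nat -> nat -> prof -> R) : Prop :=
  open_set I d U /\ (forall x, inQ I Q x -> U x) /\
  forall p, (p < I)%nat -> C2_on I d U (f p) (D p) (D2 p).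

Definition Assumption2 (I : nat) (d : nat -> nat) (Q : nat -> vec -> Prop)
    (f : nat -> prof -> R) : Prop :=
  exists U D D2, Hess_data I d Q f U D D2 /\
    exists M, forall x, inQ I Q x -> forall p i k j l,
      (p < I)%nat -> (i < I)%nat -> (k < d i)%nat -> (j < I)%nat ->
      (l < d j)%nat -> Rabs (D2 p i k j l x) <= M.

Definition mat_vec (m : nat) (A : mat) (v : vec) : vec :=
  fun k => sumR m (fun l => A k l * v l).

Definition sym_part (A : mat) : mat := fun k l => (A k l + A l k) / 2.

Definition is_eigenvalue (m : nat) (S : mat) (lam : R) : Prop :=
  exists v : vec, (exists k, (k < m)%nat /\ v k <> 0) /\
    forall k, (k < m)%nat -> mat_vec m S v k = lam * v k.

Definition lambda_least (m : nat) (A : mat) (lam : R) : Prop :=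
  is_eigenvalue m (sym_part A) lam /\
  forall mu, is_eigenvalue m (sym_part A) mu -> lam <= mu.

Definition norm2_mat (p q : nat) (A : mat) (s : R) : Prop :=
  is_lub (fun r => exists v : vec, vnorm q v = 1 /\ r = vnorm p (mat_vec q A v)) s.

Definition is_glb (E : R -> Prop) (a : R) : Prop :=
  (forall s, E s -> a <= s) /\ (forall b, (forall s, E s -> b <= s) -> b <= a).

(** alpha_i^min and beta_ij^max with C_i = I; J_j F_i (x) has entries
    (k,l) |-> D2 i i k j l x *)
Definition alpha_min (I : nat) (d : nat -> nat) (Q : nat -> vec -> Prop)
    (f : nat -> prof -> R) (i : nat) (a : R) : Prop :=
  exists U D D2, Hess_data I d Q f U D D2 /\
    is_glb (fun lam => exists x, inQ I Q x /\
              lambda_least (d i) (fun k l => D2 i i k i l x) lam) a.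

Definition beta_max (I : nat) (d : nat -> nat) (Q : nat -> vec -> Prop)
    (f : nat -> prof -> R) (i j : nat) (b : R) : Prop :=
  exists U D D2, Hess_data I d Q f U D D2 /\
    is_lub (fun r => exists x, inQ I Q x /\
              norm2_mat (d i) (d j) (fun k l => D2 i i k j l x) r) b.

Definition minor (A : mat) (j : nat) : mat :=
  fun r c => A (S r) (if Nat.ltb c j then c else S c).

Fixpoint det (m : nat) (A : mat) : R :=
  match m with
  | O => 1
  | S m' => sumR (S m') (fun j => (-1) ^ j * A O j * det m' (minor A j))
  end.

Definition P_matrix (I : nat) (M : mat) : Prop :=
  forall s : list nat, s <> nil ->
    (forall a b, (a < b)%nat -> (b < length s)%nat -> (nth a s O < nth b s O)%nat) ->
    (forall i, In i s -> (i < I)%nat) ->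
    0 < det (length s) (fun r c => M (nth r s O) (nth c s O)).

Definition is_Upsilon (I : nat) (d : nat -> nat) (Q : nat -> vec -> Prop)
    (f : nat -> prof -> R) (M : mat) : Prop :=
  (forall i, (i < I)%nat -> alpha_min I d Q f i (M i i)) /\
  (forall i j, (i < I)%nat -> (j < I)%nat -> i <> j ->
     beta_max I d Q f i j (- M i j)).

Definition PUpsilon_NEP (I : nat) (d : nat -> nat) (Q : nat -> vec -> Prop)
    (f : nat -> prof -> R) : Prop :=
  Assumption1 I d Q f /\ Assumption2 I d Q f /\
  exists M, is_Upsilon I d Q f M /\ P_matrix I M.

Definition reg_game (d : nat -> nat) (f : nat -> prof -> R) (tau : R) (y : prof)
    : nat -> prof -> R :=
  fun i x => f i x + tau / 2 * vnorm2 (d i) (fun k => x i k - y i k).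

(* Main.v *)
Require Import Defs.
From Stdlib Require Import Reals List.
Open Scope R_scope.
From Stdlib Require Import Lra Lia FunctionalExtensionality Classical.
Import Defs.


Lemma sumR_ext n g h : (forall k, (k < n)%nat -> g k = h k) -> sumR n g = sumR n h.
Proof. induction n; simpl; intros H; auto. rewrite IHn by (intros; apply H; lia). rewrite H by lia; auto. Qed.

Lemma sumR_plus n g h : sumR n (fun k => g k + h k) = sumR n g + sumR n h.
Proof. induction n; simpl; [lra| rewrite IHn; lra]. Qed.

Lemma sumR_scal n c g : sumR n (fun k => c * g k) = c * sumR n g.
Proof. induction n; simpl; [ring | rewrite IHn; ring]. Qed.

Lemma sumR_scal_r n c g : sumR n (fun k => g k * c) = sumR n g * c.
Proof. induction n; simpl; [ring | rewrite IHn; ring]. Qed.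

Lemma sumR_minus n g h : sumR n (fun k => g k - h k) = sumR n g - sumR n h.
Proof. induction n; simpl; [lra| rewrite IHn; lra]. Qed.

Lemma sumR_le n g h : (forall k, (k<n)%nat -> g k <= h k) -> sumR n g <= sumR n h.
Proof. induction n; simpl; intros H; [lra|]. assert (g n <= h n) by (apply H; lia).
  assert (sumR n g <= sumR n h) by (apply IHn; intros; apply H; lia). lra. Qed.

Lemma sumR_nonneg n g : (forall k, (k<n)%nat -> 0 <= g k) -> 0 <= sumR n g.
Proof. intros H. replace 0 with (sumR n (fun _ => 0)). apply sumR_le; auto.
  induction n; simpl; auto. rewrite IHn; [lra|intros; apply H; lia]. Qed.

Lemma sumR_zero n g : (forall k, (k<n)%nat -> g k = 0) -> sumR n g = 0.
Proof. induction n; simpl; intros H; auto. rewrite IHn, H by (try intros; try apply H; lia). lra. Qed.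

Lemma sumR_const n c : sumR n (fun _ => c) = INR n * c.
Proof. induction n; simpl sumR; [simpl; ring|]. rewrite IHn, S_INR. ring. Qed.

Lemma sumR_abs n g : Rabs (sumR n g) <= sumR n (fun k => Rabs (g k)).
Proof. induction n; simpl. rewrite Rabs_R0; lra.
  eapply Rle_trans; [apply Rabs_triang|]. lra. Qed.

Lemma sumR_term n g k : (forall j, (j<n)%nat -> 0 <= g j) -> (k<n)%nat -> g k <= sumR n g.
Proof. induction n; intros H Hk; [lia|]. simpl.
  destruct (Nat.eq_dec k n) as [->|Hne].
  - assert (0 <= sumR n g) by (apply sumR_nonneg; intros; apply H; lia). lra.
  - assert (g k <= sumR n g) by (apply IHn; [intros; apply H; lia| lia]).
    assert (0 <= g n) by (apply H; lia). lra. Qed.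

Lemma sumR_single n g i : (forall k, (k<n)%nat -> k <> i -> g k = 0) -> (i<n)%nat -> sumR n g = g i.
Proof. induction n; intros H Hi; [lia|]. simpl.
  destruct (Nat.eq_dec i n) as [->|Hne].
  - rewrite sumR_zero; [lra|]. intros; apply H; lia.
  - rewrite IHn; [|intros; apply H; lia| lia]. rewrite (H n) by lia. lra. Qed.

Lemma sumR_mono_n n m g : (forall k, (k<m)%nat -> 0 <= g k) -> (n<=m)%nat -> sumR n g <= sumR m g.
Proof. intros H Hnm. induction Hnm; [lra|]. simpl. assert (0 <= g m) by (apply H; lia).
  assert (sumR n g <= sumR m g) by (apply IHHnm; intros; apply H; lia). lra. Qed.

Lemma sumR_telescope n (a : nat -> R) : sumR n (fun m => a (S m) - a m) = a n - a O.
Proof. induction n; simpl; [ring| rewrite IHn; ring]. Qed.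

Lemma sumR_delta n (c : R) k : (k < n)%nat -> sumR n (fun l => if Nat.eqb l k then c else 0) = c.
Proof. intros Hk. rewrite (sumR_single _ _ k). now rewrite Nat.eqb_refl.
  intros l _ Hl. apply Nat.eqb_neq in Hl. now rewrite Hl. exact Hk. Qed.

Lemma sumR_delta_mul n (c : R) (v : nat -> R) k : (k < n)%nat ->
  sumR n (fun l => (if Nat.eqb l k then c else 0) * v l) = c * v k.
Proof. intros Hk. rewrite (sumR_single _ _ k). now rewrite Nat.eqb_refl.
  intros l _ Hl. apply Nat.eqb_neq in Hl. rewrite Hl; ring. exact Hk. Qed.

Lemma sub_sum_le (s : list nat) N (F : nat -> R) :
  (forall a b, (a < b)%nat -> (b < length s)%nat -> (nth a s O < nth b s O)%nat) ->
  (forall i, In i s -> (i < N)%nat) ->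
  (forall j, (j < N)%nat -> 0 <= F j) ->
  sumR (length s) (fun c => F (nth c s O)) <= sumR N F.
Proof.
  intros Hs Hin HF.
  assert (Hlt : forall c, (c < length s)%nat -> (nth c s O < N)%nat).
  { intros c Hc. apply Hin. apply nth_In. exact Hc. }
  assert (key : forall m b, (m <= length s)%nat -> (b <= N)%nat ->
     (forall c, (c < m)%nat -> (nth c s O < b)%nat) ->
     sumR m (fun c => F (nth c s O)) <= sumR b F).
  { induction m; intros b Hm Hb Hc.
    - simpl. apply sumR_nonneg. intros; apply HF; lia.
    - simpl. set (p := nth m s O).
      assert (Hpb : (p < b)%nat) by (apply Hc; lia).
      assert (IH : sumR m (fun c => F (nth c s O)) <= sumR p F).
      { apply IHm; [lia|lia|]. intros c Hcm. apply Hs; lia. }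
      assert (Hp : sumR (S p) F <= sumR b F).
      { apply sumR_mono_n; [intros; apply HF; lia| lia]. }
      simpl in Hp. lra. }
  apply key; [lia|lia|]. intros c Hc; apply Hlt; exact Hc.
Qed.


Lemma vnorm2_nonneg m v : 0 <= vnorm2 m v.
Proof. unfold vnorm2. apply sumR_nonneg. intros; apply pow2_ge_0. Qed.

Lemma pnorm2_nonneg I d x : 0 <= pnorm2 I d x.
Proof. unfold pnorm2. apply sumR_nonneg. intros; apply vnorm2_nonneg. Qed.

Lemma pdist_nonneg I d x y : 0 <= pdist I d x y.
Proof. unfold pdist. apply sqrt_pos. Qed.

Lemma coord_le_pdist I d x y i k : (i<I)%nat -> (k<d i)%nat ->
  Rabs (x i k - y i k) <= pdist I d x y.
Proof.
  intros Hi Hk. unfold pdist. rewrite <- sqrt_Rsqr_abs. apply sqrt_le_1_alt.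
  unfold pnorm2. eapply Rle_trans; [|apply (sumR_term _ _ i); [intros; apply vnorm2_nonneg|exact Hi]].
  unfold vnorm2. eapply Rle_trans; [|apply (sumR_term _ (fun k0 => (x i k0 - y i k0)^2) k); [intros; apply pow2_ge_0|exact Hk]].
  unfold Rsqr. simpl. lra.
Qed.

Lemma pdist_sym I d x y : pdist I d x y = pdist I d y x.
Proof. unfold pdist, pnorm2, vnorm2. f_equal. apply sumR_ext; intros. apply sumR_ext; intros. ring. Qed.

Lemma cont_on_eq I d g U x y : cont_on I d g U -> U x -> U y -> pdist I d x y = 0 -> g x = g y.
Proof.
  intros Hc Ux Uy H0. destruct (Req_dec (g y) (g x)) as [E|E]; [auto|].
  exfalso. assert (Hp : 0 < Rabs (g y - g x)) by (apply Rabs_pos_lt; lra).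
  destruct (Hc x Ux _ Hp) as [del [Hd Hy]]. specialize (Hy y Uy). rewrite H0 in Hy.
  specialize (Hy Hd). lra.
Qed.

Lemma pdist_sb I d x i B1 B2 c : (i < I)%nat -> 0 <= c ->
  (forall k, (k < d i)%nat -> Rabs (B2 k - B1 k) <= c) ->
  pdist I d (setblock x i B1) (setblock x i B2) <= (INR (d i) + 1) * c.
Proof.
  intros Hi Hc Hb. unfold pdist.
  assert (E : pnorm2 I d (fun j k => setblock x i B1 j k - setblock x i B2 j k)
              = vnorm2 (d i) (fun k => B1 k - B2 k)).
  { unfold pnorm2. rewrite (sumR_single _ _ i); [| |exact Hi].
    - unfold setblock. rewrite Nat.eqb_refl. reflexivity.
    - intros j _ Hj. unfold setblock. apply Nat.eqb_neq in Hj. rewrite Hj.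
      unfold vnorm2. apply sumR_zero. intros; ring. }
  rewrite E.
  assert (Hle : vnorm2 (d i) (fun k => B1 k - B2 k) <= INR (d i) * c^2).
  { unfold vnorm2. rewrite <- sumR_const. apply sumR_le. intros k Hk.
    specialize (Hb k Hk). rewrite Rabs_minus_sym in Hb.
    rewrite <- pow2_abs. assert (0 <= Rabs (B1 k - B2 k)) by apply Rabs_pos. nra. }
  assert (Hd : 0 <= INR (d i)) by apply pos_INR.
  rewrite <- (sqrt_pow2 ((INR (d i) + 1) * c)) by nra.
  apply sqrt_le_1_alt. nra.
Qed.

Definition pc I d (g : prof -> R) := forall x e, 0 < e -> exists del, 0 < del /\
  forall y, pdist I d x y < del -> Rabs (g y - g x) < e.

Lemma pc_cont_on I d g U : pc I d g -> cont_on I d g U.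
Proof. intros H x _ e He. destruct (H x e He) as [del [Hd Hy]]. exists del; split; auto. Qed.

Lemma pc_const I d c : pc I d (fun _ => c).
Proof. intros x e He. exists 1; split; [lra|]. intros. replace (c - c) with 0 by ring. rewrite Rabs_R0; lra. Qed.

Lemma pc_coord I d i k : (i<I)%nat -> (k<d i)%nat -> pc I d (fun x => x i k).
Proof. intros Hi Hk x e He. exists e; split; auto. intros y Hy.
  eapply Rle_lt_trans; [|exact Hy]. rewrite pdist_sym. apply coord_le_pdist; auto. Qed.

Lemma pc_ext I d g h : (forall x, g x = h x) -> pc I d g -> pc I d h.
Proof. intros E H x e He. destruct (H x e He) as [del [Hd Hy]]. exists del; split; auto.
  intros y Hxy. rewrite <- !E. auto. Qed.

Lemma pc_plus I d g h : pc I d g -> pc I d h -> pc I d (fun x => g x + h x).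
Proof. intros Hg Hh x e He.
  destruct (Hg x (e/2)) as [d1 [Hd1 H1]]; [lra|]. destruct (Hh x (e/2)) as [d2 [Hd2 H2]]; [lra|].
  exists (Rmin d1 d2); split; [apply Rmin_pos; auto|]. intros y Hy.
  assert (A1 := H1 y (Rlt_le_trans _ _ _ Hy (Rmin_l _ _))).
  assert (A2 := H2 y (Rlt_le_trans _ _ _ Hy (Rmin_r _ _))).
  replace (g y + h y - (g x + h x)) with ((g y - g x) + (h y - h x)) by ring.
  eapply Rle_lt_trans; [apply Rabs_triang|]. lra. Qed.

Lemma pc_mult I d g h : pc I d g -> pc I d h -> pc I d (fun x => g x * h x).
Proof. intros Hg Hh x e He.
  set (a := g x). set (b := h x).
  assert (Ha := Rabs_pos a). assert (Hb := Rabs_pos b).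
  destruct (Hg x (e / (2 * (Rabs b + 1)))) as [d1 [Hd1 H1]].
  { apply Rdiv_lt_0_compat; lra. }
  destruct (Hh x (Rmin 1 (e / (2 * (Rabs a + 1))))) as [d2 [Hd2 H2]].
  { apply Rmin_pos; [lra|]. apply Rdiv_lt_0_compat; lra. }
  exists (Rmin d1 d2); split; [apply Rmin_pos; auto|]. intros y Hy.
  assert (A1 := H1 y (Rlt_le_trans _ _ _ Hy (Rmin_l _ _))).
  assert (A2 := H2 y (Rlt_le_trans _ _ _ Hy (Rmin_r _ _))).
  fold a b in A1, A2 |- *.
  set (p := g y - a) in *. set (q := h y - b) in *.
  replace (g y * h y - a * b) with (p * b + p * q + a * q) by (unfold p, q; ring).
  assert (Hq1 : Rabs q < 1) by (eapply Rlt_le_trans; [exact A2| apply Rmin_l]).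
  assert (Hq2 : Rabs q < e / (2 * (Rabs a + 1))) by (eapply Rlt_le_trans; [exact A2| apply Rmin_r]).
  assert (Hp' : Rabs p * (2 * (Rabs b + 1)) < e).
  { apply (Rmult_lt_compat_r (2 * (Rabs b + 1))) in A1; [|lra].
    unfold Rdiv in A1. rewrite Rmult_assoc, Rinv_l in A1 by lra. lra. }
  assert (Hq' : Rabs q * (2 * (Rabs a + 1)) < e).
  { apply (Rmult_lt_compat_r (2 * (Rabs a + 1))) in Hq2; [|lra].
    unfold Rdiv in Hq2. rewrite Rmult_assoc, Rinv_l in Hq2 by lra. lra. }
  assert (Hpp := Rabs_pos p). assert (Hqq := Rabs_pos q).
  eapply Rle_lt_trans. { eapply Rle_trans; [apply Rabs_triang|].
    apply Rplus_le_compat_r. apply Rabs_triang. }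
  rewrite !Rabs_mult. nra.
Qed.

Lemma pc_sum I d n (G : nat -> prof -> R) : (forall k, (k<n)%nat -> pc I d (G k)) ->
  pc I d (fun x => sumR n (fun k => G k x)).
Proof. induction n; intros H.
  - exact (pc_const I d 0).
  - apply (pc_plus I d (fun x => sumR n (fun k => G k x)) (G n)).
    + apply IHn; intros; apply H; lia.
    + apply H; lia.
Qed.

Lemma cont_on_plus I d g h U : cont_on I d g U -> cont_on I d h U -> cont_on I d (fun x => g x + h x) U.
Proof. intros Hg Hh x Ux e He.
  destruct (Hg x Ux (e/2)) as [d1 [Hd1 H1]]; [lra|]. destruct (Hh x Ux (e/2)) as [d2 [Hd2 H2]]; [lra|].
  exists (Rmin d1 d2); split; [apply Rmin_pos; auto|]. intros y Uy Hy.
  assert (A1 := H1 y Uy (Rlt_le_trans _ _ _ Hy (Rmin_l _ _))).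
  assert (A2 := H2 y Uy (Rlt_le_trans _ _ _ Hy (Rmin_r _ _))).
  replace (g y + h y - (g x + h x)) with ((g y - g x) + (h y - h x)) by ring.
  eapply Rle_lt_trans; [apply Rabs_triang|]. lra. Qed.


Lemma dlim_ext f g x l : (forall h, f h = g h) -> derivable_pt_lim f x l -> derivable_pt_lim g x l.
Proof. intros E H. replace g with f; auto. apply functional_extensionality; auto. Qed.

Lemma dlim_val f x l l' : l = l' -> derivable_pt_lim f x l -> derivable_pt_lim f x l'.
Proof. intros ->; auto. Qed.

Lemma dlim_plus f g x l1 l2 : derivable_pt_lim f x l1 -> derivable_pt_lim g x l2 ->
  derivable_pt_lim (fun h => f h + g h) x (l1 + l2).
Proof. intros; apply (derivable_pt_lim_plus f g); auto. Qed.

Lemma dlim_const c x : derivable_pt_lim (fun _ => c) x 0.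
Proof. exact (derivable_pt_lim_const c x). Qed.

Lemma dlim_mul f g x l1 l2 : derivable_pt_lim f x l1 -> derivable_pt_lim g x l2 ->
  derivable_pt_lim (fun h => f h * g h) x (l1 * g x + f x * l2).
Proof. intros; apply (derivable_pt_lim_mult f g); auto. Qed.

Lemma dlim_mulc f x l c : derivable_pt_lim f x l -> derivable_pt_lim (fun h => f h * c) x (l * c).
Proof. intros H. eapply dlim_val; [|apply (dlim_mul f (fun _ => c)); [exact H| apply dlim_const]]. ring. Qed.

Lemma dlim_cmul c f x l : derivable_pt_lim f x l -> derivable_pt_lim (fun h => c * f h) x (c * l).
Proof. intros H. eapply dlim_val; [|apply (dlim_mul (fun _ => c) f); [apply dlim_const| exact H]]. ring. Qed.

Lemma dlim_affine a x : derivable_pt_lim (fun h => a + h) x 1.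
Proof. eapply dlim_val; [|apply (dlim_plus (fun _ => a) (fun h => h)); [apply dlim_const| apply derivable_pt_lim_id]]. ring. Qed.

Lemma dlim_sum n (F : nat -> R -> R) (F' : nat -> R) x :
  (forall k, (k<n)%nat -> derivable_pt_lim (F k) x (F' k)) ->
  derivable_pt_lim (fun h => sumR n (fun k => F k h)) x (sumR n F').
Proof. induction n; intros H.
  - exact (dlim_const 0 x).
  - simpl. apply (dlim_plus (fun h => sumR n (fun k => F k h)) (F n)).
    + apply IHn; intros; apply H; lia.
    + apply H; lia.
Qed.

Lemma dlim_shift f t L : derivable_pt_lim (fun h => f (t + h)) 0 L -> derivable_pt_lim f t L.
Proof. intros H eps He. destruct (H eps He) as [del Hd]. exists del. intros h Hh0 Hh.
  specialize (Hd h Hh0 Hh). rewrite Rplus_0_l, Rplus_0_r in Hd. exact Hd. Qed.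

Lemma dlim_sq_if (b : bool) a c :
  derivable_pt_lim (fun h => ((if b then a + h else a) - c)^2) 0 (if b then 2*(a-c) else 0).
Proof. destruct b.
  - apply (dlim_ext (fun h => (a - c + h) * (a - c + h))); [intros; ring|].
    eapply dlim_val; [|apply dlim_mul; apply dlim_affine]. ring.
  - apply dlim_const.
Qed.

Lemma dlim_lin_if (b : bool) a c t :
  derivable_pt_lim (fun h => t * ((if b then a + h else a) - c)) 0 (if b then t else 0).
Proof. destruct b.
  - apply (dlim_ext (fun h => t * (a - c + h))); [intros; ring|].
    eapply dlim_val; [|apply dlim_cmul; apply dlim_affine]. ring.
  - apply dlim_const.
Qed.

Lemma mvt_gen (G G' : R -> R) c :
  (forall s, Rabs s <= Rabs c -> derivable_pt_lim G s (G' s)) ->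
  exists s, Rabs s <= Rabs c /\ G c - G 0 = G' s * c.
Proof. intros H. destruct (Rtotal_order c 0) as [Hc|[Hc|Hc]].
  - destruct (MVT_cor2 G G' c 0 Hc) as [s [Es Hs]].
    + intros s Hs; apply H. rewrite (Rabs_left c) by lra. unfold Rabs; destruct Rcase_abs; lra.
    + exists s; split; [rewrite (Rabs_left c) by lra; unfold Rabs; destruct Rcase_abs; lra| lra].
  - subst c. exists 0; split; [lra| ring].
  - destruct (MVT_cor2 G G' 0 c Hc) as [s [Es Hs]].
    + intros s Hs; apply H. rewrite (Rabs_right c) by lra. unfold Rabs; destruct Rcase_abs; lra.
    + exists s; split; [rewrite (Rabs_right c) by lra; unfold Rabs; destruct Rcase_abs; lra| lra].
Qed.

Lemma unif_delta n (Pr : nat -> R -> Prop) :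
  (forall m del del', 0 < del' <= del -> Pr m del -> Pr m del') ->
  (forall m, (m<n)%nat -> exists del, 0 < del /\ Pr m del) ->
  exists del, 0 < del /\ forall m, (m<n)%nat -> Pr m del.
Proof. intros Hmono. induction n; intros H.
  - exists 1; split; [lra| intros; lia].
  - destruct IHn as [d1 [Hd1 H1]]; [intros; apply H; lia|].
    destruct (H n (Nat.lt_succ_diag_r n)) as [d2 [Hd2 H2]].
    exists (Rmin d1 d2); split; [apply Rmin_pos; auto|]. intros m Hm.
    destruct (Nat.eq_dec m n) as [->|Hne].
    + apply (Hmono n d2); [split; [apply Rmin_pos; auto| apply Rmin_r]| auto].
    + apply (Hmono m d1); [split; [apply Rmin_pos; auto| apply Rmin_l]| apply H1; lia].
Qed.

Definition seg (x : prof) (i : nat) (v w : vec) (t : R) : prof :=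
  setblock x i (fun k => t * v k + (1 - t) * w k).

Lemma upd_sb x i B m s :
  upd (setblock x i B) i m s = setblock x i (fun k => if Nat.eqb k m then B k + s else B k).
Proof. apply functional_extensionality; intro j. apply functional_extensionality; intro l.
  unfold upd, setblock. destruct (Nat.eqb j i); destruct (Nat.eqb l m); simpl; reflexivity. Qed.

Lemma partial_line I d U g Dg x i B m s : (i<I)%nat -> (m < d i)%nat -> C1_on I d U g Dg ->
  U (setblock x i (fun k => if Nat.eqb k m then B k + s else B k)) ->
  derivable_pt_lim (fun s' => g (setblock x i (fun k => if Nat.eqb k m then B k + s' else B k))) s
     (Dg i m (setblock x i (fun k => if Nat.eqb k m then B k + s else B k))).
Proof.
  intros Hi Hm [_ HC] HU. destruct (HC i m Hi Hm) as [Hp _].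
  specialize (Hp _ HU). unfold has_partial in Hp.
  apply dlim_shift. eapply dlim_ext; [|exact Hp]. intros h. simpl. rewrite upd_sb.
  f_equal. f_equal. apply functional_extensionality; intro k.
  destruct (Nat.eqb k m); ring.
Qed.


Lemma chain I d U g Dg x i v w t0 :
  (i < I)%nat -> open_set I d U -> C1_on I d U g Dg -> U (seg x i v w t0) ->
  derivable_pt_lim (fun t => g (seg x i v w t)) t0
    (sumR (d i) (fun m => Dg i m (seg x i v w t0) * (v m - w m))).
Proof.
  intros Hi HU HC HP.
  set (n := d i). set (u := fun m => v m - w m).
  set (b0 := fun k => t0 * v k + (1 - t0) * w k).
  set (P := seg x i v w t0).
  set (Um := sumR n (fun m => Rabs (u m))).
  assert (HUm : 0 <= Um) by (apply sumR_nonneg; intros; apply Rabs_pos).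
  assert (Hu : forall m, (m < n)%nat -> Rabs (u m) <= Um).
  { intros m Hm. apply (sumR_term n (fun m => Rabs (u m))); [intros; apply Rabs_pos| exact Hm]. }
  destruct (HU P HP) as [e0 [He0 Hball]].
  intros eps Heps.
  set (eps' := eps / (Um + 1)).
  assert (Heps' : 0 < eps') by (unfold eps'; apply Rdiv_lt_0_compat; lra).
  destruct (unif_delta n (fun m del => forall y, U y -> pdist I d P y < del ->
              Rabs (Dg i m y - Dg i m P) < eps')) as [d1 [Hd1 Hunif]].
  { intros m del del' [Hd' Hle] Hm y Uy Hy. apply Hm; auto. lra. }
  { intros m Hm. destruct HC as [_ HC']. destruct (HC' i m Hi Hm) as [_ Hcont].
    destruct (Hcont P HP eps' Heps') as [del [Hdel Hd]]. exists del; split; auto. }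
  set (C := (INR n + 1) * (Um + 1)).
  assert (Hn : 0 <= INR n) by apply pos_INR.
  assert (HC0 : 0 < C) by (unfold C; nra).
  set (r := Rmin d1 e0).
  assert (Hr : 0 < r) by (apply Rmin_pos; auto).
  assert (Hpos : 0 < r / C) by (apply Rdiv_lt_0_compat; auto).
  exists (mkposreal _ Hpos). intros h Hh0 Hhd. simpl in Hhd.
  assert (Hha : 0 < Rabs h) by (apply Rabs_pos_lt; auto).
  assert (Hsmall : (INR n + 1) * (Rabs h * Um) < r).
  { apply (Rmult_lt_compat_r C) in Hhd; [|exact HC0].
    unfold Rdiv in Hhd. rewrite Rmult_assoc, Rinv_l in Hhd by lra.
    unfold C in Hhd. nra. }
  set (Bm := fun m k => if Nat.ltb k m then b0 k + h * u k else b0 k).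
  assert (HPsb : P = setblock x i b0) by reflexivity.
  assert (Hclose : forall m s, (m < n)%nat -> Rabs s <= Rabs h * Rabs (u m) ->
     let Y := setblock x i (fun k => if Nat.eqb k m then Bm m k + s else Bm m k) in
     U Y /\ Rabs (Dg i m Y - Dg i m P) < eps').
  { intros m s Hm Hs Y.
    assert (Hd : pdist I d P Y <= (INR n + 1) * (Rabs h * Um)).
    { rewrite HPsb. apply pdist_sb; [exact Hi| apply Rmult_le_pos; [lra|exact HUm]|].
      intros k Hk. unfold Bm.
      destruct (Nat.eqb_spec k m) as [->|Hkm].
      - rewrite Nat.ltb_irrefl. replace (b0 m + s - b0 m) with s by ring.
        eapply Rle_trans; [exact Hs|]. apply Rmult_le_compat_l; [lra| apply Hu; exact Hm].
      - destruct (Nat.ltb k m).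
        + replace (b0 k + h * u k - b0 k) with (h * u k) by ring. rewrite Rabs_mult.
          apply Rmult_le_compat_l; [lra| apply Hu; exact Hk].
        + replace (b0 k - b0 k) with 0 by ring. rewrite Rabs_R0. nra. }
    assert (HY : U Y) by (apply Hball; unfold r in Hsmall; assert (Rmin d1 e0 <= e0) by apply Rmin_r; lra).
    split; [exact HY|]. apply (Hunif m Hm Y HY).
    unfold r in Hsmall; assert (Rmin d1 e0 <= d1) by apply Rmin_l; lra. }
  assert (Hterm : forall m, (m < n)%nat ->
     Rabs (g (setblock x i (Bm (S m))) - g (setblock x i (Bm m)) - Dg i m P * (h * u m))
       <= eps' * (Rabs h * Rabs (u m))).
  { intros m Hm.
    set (G := fun s => g (setblock x i (fun k => if Nat.eqb k m then Bm m k + s else Bm m k))).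
    set (G' := fun s => Dg i m (setblock x i (fun k => if Nat.eqb k m then Bm m k + s else Bm m k))).
    assert (E0 : G 0 = g (setblock x i (Bm m))).
    { unfold G. f_equal. f_equal. apply functional_extensionality; intro k.
      destruct (Nat.eqb k m); ring. }
    assert (E1 : G (h * u m) = g (setblock x i (Bm (S m)))).
    { unfold G. f_equal. f_equal. apply functional_extensionality; intro k. unfold Bm.
      destruct (Nat.eqb_spec k m) as [->|Hkm].
      - rewrite Nat.ltb_irrefl. replace (Nat.ltb m (S m)) with true; [ring|].
        symmetry; apply Nat.ltb_lt; lia.
      - destruct (Nat.ltb_spec k m); destruct (Nat.ltb_spec k (S m)); try lia; ring. }
    destruct (mvt_gen G G' (h * u m)) as [s [Hs Es]].
    { intros s Hs. rewrite Rabs_mult in Hs. destruct (Hclose m s Hm Hs) as [HY _].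
      apply (partial_line I d U g Dg x i (Bm m) m s Hi Hm HC HY). }
    rewrite <- E0, <- E1, Es. rewrite Rabs_mult in Hs.
    destruct (Hclose m s Hm Hs) as [_ Hds]. fold (G' s) in Hds.
    replace (G' s * (h * u m) - Dg i m P * (h * u m)) with ((G' s - Dg i m P) * (h * u m)) by ring.
    rewrite Rabs_mult, (Rabs_mult h). apply Rmult_le_compat_r; [apply Rmult_le_pos; apply Rabs_pos| lra]. }
  assert (Htel : Rabs (g (setblock x i (Bm n)) - g (setblock x i (Bm O))
               - h * sumR n (fun m => Dg i m P * u m)) <= eps' * (Rabs h * Um)).
  { rewrite <- (sumR_telescope n (fun m => g (setblock x i (Bm m)))).
    rewrite <- sumR_scal, <- sumR_minus.
    eapply Rle_trans; [apply sumR_abs|].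
    unfold Um. rewrite <- sumR_scal, <- sumR_scal. apply sumR_le. intros m Hm.
    replace (h * (Dg i m P * u m)) with (Dg i m P * (h * u m)) by ring.
    eapply Rle_trans; [apply Hterm; exact Hm| right; ring]. }
  assert (EB0 : setblock x i (Bm O) = P).
  { rewrite HPsb. f_equal; try (apply functional_extensionality; intro k; unfold Bm; destruct k; reflexivity). }
  assert (Hseg : U (seg x i v w (t0 + h))).
  { apply Hball. eapply Rle_lt_trans; [|eapply Rlt_le_trans; [exact Hsmall| apply Rmin_r]].
    rewrite HPsb. unfold seg. apply pdist_sb; [exact Hi| apply Rmult_le_pos; [lra|exact HUm]|].
    intros k Hk. replace ((t0 + h) * v k + (1 - (t0 + h)) * w k - b0 k) with (h * u k)
      by (unfold b0, u; ring).
    rewrite Rabs_mult. apply Rmult_le_compat_l; [lra| apply Hu; exact Hk]. }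
  assert (HBn : U (setblock x i (Bm n))).
  { apply Hball. eapply Rle_lt_trans; [|eapply Rlt_le_trans; [exact Hsmall| apply Rmin_r]].
    rewrite HPsb. apply pdist_sb; [exact Hi| apply Rmult_le_pos; [lra|exact HUm]|].
    intros k Hk. unfold Bm. destruct (Nat.ltb k n).
    - replace (b0 k + h * u k - b0 k) with (h * u k) by ring. rewrite Rabs_mult.
      apply Rmult_le_compat_l; [lra| apply Hu; exact Hk].
    - replace (b0 k - b0 k) with 0 by ring. rewrite Rabs_R0. nra. }
  assert (Eseg : g (seg x i v w (t0 + h)) = g (setblock x i (Bm n))).
  { destruct HC as [Hgc _]. apply (cont_on_eq I d g U); auto.
    apply Rle_antisym; [|apply pdist_nonneg].
    replace 0 with ((INR (d i) + 1) * 0) by ring. unfold seg.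
    apply pdist_sb; [exact Hi| lra|]. intros k Hk. unfold Bm.
    replace (Nat.ltb k n) with true by (symmetry; apply Nat.ltb_lt; exact Hk).
    replace (b0 k + h * u k - ((t0 + h) * v k + (1 - (t0 + h)) * w k)) with 0 by (unfold b0, u; ring).
    rewrite Rabs_R0; lra. }
  fold P. rewrite Eseg. rewrite EB0 in Htel.
  change (Rabs ((g (setblock x i (Bm n)) - g P) / h - sumR n (fun m => Dg i m P * u m)) < eps).
  replace ((g (setblock x i (Bm n)) - g P) / h - sumR n (fun m => Dg i m P * u m))
    with ((g (setblock x i (Bm n)) - g P - h * sumR n (fun m => Dg i m P * u m)) * / h)
    by (field; exact Hh0).
  rewrite Rabs_mult, Rabs_inv.
  assert (Hq : eps' * Um < eps).
  { unfold eps'. apply (Rmult_lt_reg_r (Um + 1)); [lra|].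
    unfold Rdiv. replace (eps * / (Um + 1) * Um * (Um + 1)) with (eps * Um * ((Um + 1) * / (Um + 1))) by ring.
    rewrite Rinv_r by lra. nra. }
  apply (Rmult_le_compat_r (/ Rabs h)) in Htel; [|left; apply Rinv_0_lt_compat; exact Hha].
  replace (eps' * (Rabs h * Um) * / Rabs h) with (eps' * Um) in Htel by (field; lra).
  lra.
Qed.

Lemma convex_from_second (phi psi psi' : R -> R) :
  (forall t, 0 <= t <= 1 -> derivable_pt_lim phi t (psi t)) ->
  (forall t, 0 <= t <= 1 -> derivable_pt_lim psi t (psi' t)) ->
  (forall t, 0 <= t <= 1 -> 0 <= psi' t) ->
  forall t, 0 <= t <= 1 -> phi t <= t * phi 1 + (1 - t) * phi 0.
Proof.
  intros H1 H2 H3 t Ht.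
  destruct (Req_dec t 0) as [->|Ht0]; [right; ring|].
  destruct (Req_dec t 1) as [->|Ht1]; [right; ring|].
  assert (Htt : 0 < t < 1) by lra.
  destruct (MVT_cor2 phi psi 0 t) as [c1 [E1 Hc1]]; [lra| intros; apply H1; lra|].
  destruct (MVT_cor2 phi psi t 1) as [c2 [E2 Hc2]]; [lra| intros; apply H1; lra|].
  destruct (MVT_cor2 psi psi' c1 c2) as [c3 [E3 Hc3]]; [lra| intros; apply H2; lra|].
  assert (0 <= psi' c3) by (apply H3; lra).
  assert (Hd : 0 <= psi c2 - psi c1) by (rewrite E3; apply Rmult_le_pos; lra).
  assert (0 <= t * (1 - t) * (psi c2 - psi c1)) by (apply Rmult_le_pos; [apply Rmult_le_pos|]; lra).
  nra.
Qed.


Definition Dreg (D : nat -> nat -> nat -> prof -> R) (tau : R) (y : prof) :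
  nat -> nat -> nat -> prof -> R :=
  fun p i k x => D p i k x + (if Nat.eqb i p then tau * (x p k - y p k) else 0).

Definition D2reg (D2 : nat -> nat -> nat -> nat -> nat -> prof -> R) (tau : R) :
  nat -> nat -> nat -> nat -> nat -> prof -> R :=
  fun p i k j l x => D2 p i k j l x +
    (if andb (Nat.eqb i p) (andb (Nat.eqb j p) (Nat.eqb l k)) then tau else 0).

Lemma pc_diff I d p k c : (p < I)%nat -> (k < d p)%nat -> pc I d (fun x => x p k - c).
Proof. intros Hp Hk. apply (pc_ext I d (fun x => x p k + (- c))); [intros; ring|].
  apply (pc_plus I d (fun x => x p k) (fun _ => - c)); [apply pc_coord; auto| apply pc_const]. Qed.

Lemma pc_quad I d p tau y : (p < I)%nat ->
  pc I d (fun x => tau / 2 * vnorm2 (d p) (fun k => x p k - y p k)).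
Proof. intros Hp.
  apply (pc_mult I d (fun _ => tau / 2) (fun x => vnorm2 (d p) (fun k => x p k - y p k))); [apply pc_const|].
  unfold vnorm2. apply (pc_sum I d (d p) (fun k x => (x p k - y p k) ^ 2)).
  intros k Hk. apply (pc_ext I d (fun x => (x p k - y p k) * (x p k - y p k))); [intros; ring|].
  apply (pc_mult I d (fun x => x p k - y p k) (fun x => x p k - y p k)); apply pc_diff; auto.
Qed.

Lemma reg_C1 I d U f D tau y p : (p < I)%nat -> C1_on I d U (f p) (D p) ->
  C1_on I d U (reg_game d f tau y p) (Dreg D tau y p).
Proof.
  intros Hp [Hc Hd]. split.
  - unfold reg_game. apply (cont_on_plus I d (f p)); auto. apply pc_cont_on, pc_quad; auto.
  - intros i k Hi Hk. destruct (Hd i k Hi Hk) as [Hpar Hcd]. split.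
    + intros x Ux. unfold has_partial, reg_game, Dreg.
      apply (dlim_plus (fun h => f p (upd x i k h))); [apply Hpar; auto|].
      eapply dlim_val; [|apply dlim_cmul; unfold vnorm2;
        apply (dlim_sum (d p) (fun k0 h => (upd x i k h p k0 - y p k0) ^ 2)
                 (fun k0 => if andb (Nat.eqb p i) (Nat.eqb k0 k) then 2 * (x p k0 - y p k0) else 0))].
      * destruct (Nat.eqb_spec i p) as [->|Hip].
        -- rewrite Nat.eqb_refl. simpl.
           rewrite (sumR_single _ _ k); [rewrite Nat.eqb_refl; field| |exact Hk].
           intros k0 _ Hk0. apply Nat.eqb_neq in Hk0. rewrite Hk0. reflexivity.
        -- replace (Nat.eqb p i) with false by (symmetry; apply Nat.eqb_neq; auto). simpl.
           rewrite sumR_zero; [ring| intros; reflexivity].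
      * intros k0 Hk0. unfold upd. apply dlim_sq_if.
    + unfold Dreg. apply (cont_on_plus I d (D p i k)); auto. apply pc_cont_on.
      destruct (Nat.eqb_spec i p) as [->|Hip].
      * apply (pc_mult I d (fun _ => tau) (fun x => x p k - y p k)); [apply pc_const| apply pc_diff; auto].
      * apply pc_const.
Qed.

Lemma reg_C1' I d U D D2 tau y p i k : (i < I)%nat -> (k < d i)%nat ->
  C1_on I d U (D p i k) (D2 p i k) ->
  C1_on I d U (Dreg D tau y p i k) (D2reg D2 tau p i k).
Proof.
  intros Hi Hk [Hc Hd]. split.
  - unfold Dreg. apply (cont_on_plus I d (D p i k)); auto. apply pc_cont_on.
    destruct (Nat.eqb_spec i p) as [->|Hip].
    + apply (pc_mult I d (fun _ => tau) (fun x => x p k - y p k)); [apply pc_const| apply pc_diff; auto].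
    + apply pc_const.
  - intros j l Hj Hl. destruct (Hd j l Hj Hl) as [Hpar Hcd]. split.
    + intros x Ux. unfold has_partial, Dreg, D2reg.
      apply (dlim_plus (fun h => D p i k (upd x j l h))); [apply Hpar; auto|].
      destruct (Nat.eqb i p); simpl; [|apply dlim_const].
      unfold upd. eapply dlim_val; [|apply dlim_lin_if].
      rewrite (Nat.eqb_sym p j), (Nat.eqb_sym k l). reflexivity.
    + unfold D2reg. apply (cont_on_plus I d (D2 p i k j l)); auto. apply pc_cont_on, pc_const.
Qed.

Lemma reg_hess I d Q f U D D2 tau y : Hess_data I d Q f U D D2 ->
  Hess_data I d Q (reg_game d f tau y) U (Dreg D tau y) (D2reg D2 tau).
Proof.
  intros [HU [HQ HC2]]. split; auto. split; auto. intros p Hp.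
  destruct (HC2 p Hp) as [HC1 HC1']. split.
  - apply reg_C1; auto.
  - intros i k Hi Hk. apply reg_C1'; auto.
Qed.

Lemma reg_A2 I d Q f tau y : Assumption2 I d Q f -> Assumption2 I d Q (reg_game d f tau y).
Proof.
  intros [U [D [D2 [HH [M HM]]]]]. exists U, (Dreg D tau y), (D2reg D2 tau).
  split; [apply reg_hess; auto|]. exists (M + Rabs tau). intros x Hx p i k j l Hp Hi Hk Hj Hl.
  unfold D2reg. eapply Rle_trans; [apply Rabs_triang|]. apply Rplus_le_compat; [apply HM; auto|].
  destruct (andb _ _); [lra| rewrite Rabs_R0; apply Rabs_pos].
Qed.

Lemma mat_vec_shift n S tau v k : (k < n)%nat ->
  mat_vec n (fun k l => S k l + (if Nat.eqb l k then tau else 0)) v k = mat_vec n S v k + tau * v k.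
Proof. intros Hk. unfold mat_vec. rewrite <- (sumR_delta_mul n tau v k Hk), <- sumR_plus.
  apply sumR_ext; intros; ring. Qed.

Lemma sym_shift S tau : sym_part (fun k l => S k l + (if Nat.eqb l k then tau else 0)) =
  fun k l => sym_part S k l + (if Nat.eqb l k then tau else 0).
Proof. apply functional_extensionality; intro k; apply functional_extensionality; intro l.
  unfold sym_part. rewrite (Nat.eqb_sym k l). destruct (Nat.eqb l k); field. Qed.

Lemma eig_shift n S tau lam :
  is_eigenvalue n (sym_part (fun k l => S k l + (if Nat.eqb l k then tau else 0))) lam <->
  is_eigenvalue n (sym_part S) (lam - tau).
Proof. rewrite sym_shift. unfold is_eigenvalue. split; intros [v [Hv He]]; exists v; split; auto;
  intros k Hk; specialize (He k Hk).
  - rewrite mat_vec_shift in He by auto. lra.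
  - rewrite mat_vec_shift by auto. lra. Qed.

Lemma least_shift n S tau lam :
  lambda_least n (fun k l => S k l + (if Nat.eqb l k then tau else 0)) lam <->
  lambda_least n S (lam - tau).
Proof. unfold lambda_least. split; intros [He Hl]; split.
  - apply eig_shift; auto.
  - intros mu Hmu. assert (H : is_eigenvalue n (sym_part (fun k l => S k l + (if Nat.eqb l k then tau else 0))) (mu + tau)).
    { apply eig_shift. replace (mu + tau - tau) with mu by ring. auto. }
    specialize (Hl _ H). lra.
  - apply eig_shift. auto.
  - intros mu Hmu. apply eig_shift in Hmu. specialize (Hl _ Hmu). lra.
Qed.

Lemma is_glb_ext E F a : (forall r, E r <-> F r) -> is_glb E a -> is_glb F a.
Proof. intros H [H1 H2]. split.
  - intros s Hs. apply H1, H, Hs.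
  - intros b Hb. apply H2. intros s Hs. apply Hb, H, Hs. Qed.

Lemma is_lub_ext E F a : (forall r, E r <-> F r) -> is_lub E a -> is_lub F a.
Proof. intros H [H1 H2]. split.
  - intros s Hs. apply H1, H, Hs.
  - intros b Hb. apply H2. intros s Hs. apply Hb, H, Hs. Qed.

Lemma is_glb_shift E a tau : is_glb E a -> is_glb (fun r => E (r - tau)) (a + tau).
Proof. intros [H1 H2]. split.
  - intros s Hs. specialize (H1 _ Hs). lra.
  - intros b Hb. assert (b - tau <= a); [|lra]. apply H2. intros s Hs.
    assert (E (s + tau - tau)) by (replace (s + tau - tau) with s by ring; auto).
    specialize (Hb _ H). lra. Qed.

Lemma lub_nonempty E m : is_lub E m -> exists r, E r.
Proof. intros [H1 H2]. apply NNPP. intros Hn.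
  assert (m <= m - 1); [|lra]. apply H2. intros r Hr. exfalso; apply Hn; exists r; auto. Qed.

Lemma glb_nonempty E m : is_glb E m -> exists r, E r.
Proof. intros [H1 H2]. apply NNPP. intros Hn.
  assert (m + 1 <= m); [|lra]. apply H2. intros r Hr. exfalso; apply Hn; exists r; auto. Qed.

Lemma reg_alpha I d Q f tau y i a : alpha_min I d Q f i a ->
  alpha_min I d Q (reg_game d f tau y) i (a + tau).
Proof.
  intros [U [D [D2 [HH Hglb]]]]. exists U, (Dreg D tau y), (D2reg D2 tau).
  split; [apply reg_hess; auto|].
  apply (is_glb_ext (fun r => exists x, inQ I Q x /\ lambda_least (d i) (fun k l => D2 i i k i l x) (r - tau))).
  - intros r. split; intros [x [Hx Hl]]; exists x; split; auto.
    + assert (E : (fun k l => D2reg D2 tau i i k i l x) = (fun k l => D2 i i k i l x + (if Nat.eqb l k then tau else 0))).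
      { apply functional_extensionality; intro k; apply functional_extensionality; intro l.
        unfold D2reg. rewrite Nat.eqb_refl. reflexivity. }
      rewrite E. apply least_shift. auto.
    + assert (E : (fun k l => D2reg D2 tau i i k i l x) = (fun k l => D2 i i k i l x + (if Nat.eqb l k then tau else 0))).
      { apply functional_extensionality; intro k; apply functional_extensionality; intro l.
        unfold D2reg. rewrite Nat.eqb_refl. reflexivity. }
      rewrite E in Hl. apply least_shift in Hl. auto.
  - apply (is_glb_shift (fun lam => exists x, inQ I Q x /\ lambda_least (d i) (fun k l => D2 i i k i l x) lam)). auto.
Qed.

Lemma reg_beta I d Q f tau y i j b : i <> j -> beta_max I d Q f i j b ->
  beta_max I d Q (reg_game d f tau y) i j b.
Proof.
  intros Hij [U [D [D2 [HH Hlub]]]]. exists U, (Dreg D tau y), (D2reg D2 tau).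
  split; [apply reg_hess; auto|].
  eapply is_lub_ext; [|exact Hlub]. intros r.
  assert (E : forall x, (fun k l => D2reg D2 tau i i k j l x) = (fun k l => D2 i i k j l x)).
  { intros x. apply functional_extensionality; intro k; apply functional_extensionality; intro l.
    unfold D2reg. rewrite Nat.eqb_refl. replace (Nat.eqb j i) with false by (symmetry; apply Nat.eqb_neq; auto).
    simpl. ring. }
  split; intros [x [Hx Hn]]; exists x; split; auto; rewrite E in *; auto.
Qed.

Lemma beta_nonneg I d Q f i j b : beta_max I d Q f i j b -> 0 <= b.
Proof.
  intros [U [D [D2 [_ Hlub]]]].
  destruct (lub_nonempty _ _ Hlub) as [r [x [Hx Hn]]].
  destruct (lub_nonempty _ _ Hn) as [s [v [Hv Es]]].
  assert (0 <= s) by (rewrite Es; unfold vnorm; apply sqrt_pos).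
  assert (s <= r) by (apply (proj1 Hn); exists v; auto).
  assert (r <= b) by (apply (proj1 Hlub); exists x; auto).
  lra.
Qed.


Definition SPEC_HYP : Prop := forall n (H : mat), (0 < n)%nat ->
  exists mu, lambda_least n H mu /\
    forall u : vec, Rle (Rmult mu (vnorm2 n u))
                        (sumR n (fun m => Rmult (mat_vec n H u m) (u m))).

Definition SDD_HYP : Prop := forall n (A : mat),
  (forall k, (k < n)%nat ->
     Rlt (sumR n (fun l => if Nat.eqb l k then 0%R else Rabs (A k l))) (A k k)) ->
  Rlt 0 (det n A).

Lemma seg_inQ I Q x i v w t : (forall j, (j < I)%nat -> convex_vset (Q j)) ->
  inQ I Q x -> Q i v -> Q i w -> 0 <= t <= 1 -> inQ I Q (seg x i v w t).
Proof.
  intros Hc Hx Hv Hw Ht j Hj. unfold seg, setblock.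
  destruct (Nat.eqb_spec j i) as [->|Hji]; [apply Hc; auto| apply Hx; auto].
Qed.

Lemma reg_convex (SP : SPEC_HYP) I d Q f tau y i a :
  (i < I)%nat -> (forall j, (j < I)%nat -> convex_vset (Q j)) ->
  alpha_min I d Q f i a -> 0 <= a + tau ->
  forall x, inQ I Q x -> forall v w t, Q i v -> Q i w -> 0 <= t <= 1 ->
  reg_game d f tau y i (setblock x i (fun k => t * v k + (1 - t) * w k))
    <= t * reg_game d f tau y i (setblock x i v) + (1 - t) * reg_game d f tau y i (setblock x i w).
Proof.
  intros Hi Hconv [U [D [D2 [HH Hglb]]]] Hat x Hx v w t Hv Hw Ht.
  destruct (reg_hess I d Q f U D D2 tau y HH) as [HU [HQU HC2]].
  destruct (HC2 i Hi) as [HC1 HC1'].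
  set (n := d i).
  set (phi := fun t => reg_game d f tau y i (seg x i v w t)).
  set (psi := fun t => sumR n (fun m => Dreg D tau y i i m (seg x i v w t) * (v m - w m))).
  set (psi' := fun t => sumR n (fun m =>
      sumR n (fun l => D2reg D2 tau i i m i l (seg x i v w t) * (v l - w l)) * (v m - w m))).
  assert (Hseg : forall t, 0 <= t <= 1 -> U (seg x i v w t)).
  { intros s Hs. apply HQU. apply seg_inQ; auto. }
  assert (Hconvx := convex_from_second phi psi psi').
  assert (E1 : phi 1 = reg_game d f tau y i (setblock x i v)).
  { unfold phi, seg. f_equal. f_equal. apply functional_extensionality; intro k. ring. }
  assert (E0 : phi 0 = reg_game d f tau y i (setblock x i w)).
  { unfold phi, seg. f_equal. f_equal. apply functional_extensionality; intro k. ring. }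
  rewrite <- E1, <- E0. apply Hconvx; [| | |exact Ht].
  - intros s Hs. unfold phi, psi. apply (chain I d U); auto.
  - intros s Hs. unfold psi, psi'.
    apply (dlim_sum n (fun m s => Dreg D tau y i i m (seg x i v w s) * (v m - w m))).
    intros m Hm. apply (dlim_mulc (fun s => Dreg D tau y i i m (seg x i v w s))).
    apply (chain I d U); auto.
  - intros s Hs. unfold psi'.
    set (z := seg x i v w s).
    set (u := fun m => v m - w m).
    set (H := fun k l => D2 i i k i l z).
    assert (E : sumR n (fun m => sumR n (fun l => D2reg D2 tau i i m i l z * (v l - w l)) * (v m - w m))
              = sumR n (fun m => mat_vec n H u m * u m) + tau * vnorm2 n u).
    { unfold vnorm2. rewrite <- sumR_scal, <- sumR_plus. apply sumR_ext. intros m Hm.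
      assert (Ei : sumR n (fun l => D2reg D2 tau i i m i l z * (v l - w l)) = mat_vec n H u m + tau * u m).
      { unfold D2reg. rewrite Nat.eqb_refl. simpl.
        rewrite <- (sumR_delta_mul n tau u m Hm). unfold mat_vec. rewrite <- sumR_plus.
        apply sumR_ext. intros l Hl. unfold H, u. ring. }
      rewrite Ei. unfold u. ring. }
    rewrite E.
    assert (Hvn := vnorm2_nonneg n u).
    destruct n as [|n'] eqn:En.
    + unfold vnorm2; simpl; lra.
    + destruct (SP (S n') H ltac:(lia)) as [mu [Hmu Hq]].
      assert (Ham : a <= mu).
      { apply (proj1 Hglb). exists z. split; [apply seg_inQ; auto|].
        unfold H in Hmu. rewrite <- En in Hmu. exact Hmu. }
      specialize (Hq u). nra.
Qed.

Lemma Pmat (SDD : SDD_HYP) I (alpha : nat -> R) (beta : nat -> nat -> R) tau :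
  (forall i j, (i < I)%nat -> (j < I)%nat -> i <> j -> 0 <= beta i j) ->
  (forall i, (i < I)%nat -> sumR I (fun j => if Nat.eqb j i then 0 else beta i j) < alpha i + tau) ->
  P_matrix I (fun i j => if Nat.eqb i j then alpha i + tau else - beta i j).
Proof.
  intros Hb Hd s Hne Hs Hin. apply SDD. intros r Hr.
  assert (Hinj : forall c, (c < length s)%nat -> c <> r -> nth c s O <> nth r s O).
  { intros c Hc Hcr. destruct (Nat.lt_total c r) as [Hlt|[Heq|Hgt]].
    - specialize (Hs c r Hlt Hr). lia.
    - lia.
    - specialize (Hs r c Hgt Hc). lia. }
  assert (HsI : forall c, (c < length s)%nat -> (nth c s O < I)%nat).
  { intros c Hc. apply Hin. apply nth_In; auto. }
  set (p := nth r s O).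
  set (F := fun j => if Nat.eqb j p then 0 else beta p j).
  rewrite Nat.eqb_refl.
  apply Rle_lt_trans with (sumR I F); [| apply Hd; apply HsI; auto].
  eapply Rle_trans; [|apply (sub_sum_le s I F); auto].
  - right. apply sumR_ext. intros c Hc. unfold F.
    destruct (Nat.eqb_spec c r) as [->|Hcr].
    + fold p. rewrite Nat.eqb_refl. reflexivity.
    + assert (Hne' := Hinj c Hc Hcr). fold p in Hne'.
      replace (Nat.eqb p (nth c s O)) with false by (symmetry; apply Nat.eqb_neq; auto).
      replace (Nat.eqb (nth c s O) p) with false by (symmetry; apply Nat.eqb_neq; auto).
      rewrite Rabs_Ropp. apply Rabs_right. apply Rle_ge. apply Hb; auto. apply HsI; auto.
  - intros j Hj. unfold F. destruct (Nat.eqb_spec j p); [lra|]. apply Hb; auto. apply HsI; auto.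
Qed.

Theorem main_aux (SDD : SDD_HYP) (SP : SPEC_HYP) (I : nat) (d : nat -> nat) (Q : nat -> vec -> Prop)
    (f : nat -> prof -> R) (alpha : nat -> R) (beta : nat -> nat -> R)
    (taubar : R) :
  Assumption1 I d Q f ->
  Assumption2 I d Q f ->
  (forall i, (i < I)%nat -> alpha_min I d Q f i (alpha i)) ->
  (forall i j, (i < I)%nat -> (j < I)%nat -> i <> j ->
     beta_max I d Q f i j (beta i j)) ->
  (forall i, (i < I)%nat ->
     sumR I (fun j => if Nat.eqb j i then 0 else beta i j) - alpha i <= taubar) ->
  (exists i, (i < I)%nat /\
     sumR I (fun j => if Nat.eqb j i then 0 else beta i j) - alpha i = taubar) ->
  forall (y : prof) (tau : R), taubar < tau ->
    PUpsilon_NEP I d Q (reg_game d f tau y).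
Proof.
  intros HA1 HA2 Halpha Hbeta Htau Hex y tau Htt.
  assert (Hb0 : forall i j, (i < I)%nat -> (j < I)%nat -> i <> j -> 0 <= beta i j).
  { intros i j Hi Hj Hij. apply (beta_nonneg I d Q f i j); auto. }
  assert (Hdom : forall i, (i < I)%nat ->
     sumR I (fun j => if Nat.eqb j i then 0 else beta i j) < alpha i + tau).
  { intros i Hi. specialize (Htau i Hi). lra. }
  assert (Hat : forall i, (i < I)%nat -> 0 <= alpha i + tau).
  { intros i Hi. specialize (Hdom i Hi).
    assert (0 <= sumR I (fun j => if Nat.eqb j i then 0 else beta i j)); [|lra].
    apply sumR_nonneg. intros j Hj. destruct (Nat.eqb_spec j i); [lra|]. apply Hb0; auto. }
  destruct HA1 as [HQ [[U [D [HUo [HQU HC1]]]] Hconv]].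
  split; [|split].
  - split; [exact HQ|]. split.
    + exists U, (Dreg D tau y). split; auto. split; auto. intros p Hp. apply reg_C1; auto.
    + intros i Hi x Hx v w t Hv Hw Ht.
      apply (reg_convex SP I d Q f tau y i (alpha i)); auto.
      intros j Hj. apply HQ; auto.
  - apply reg_A2; auto.
  - exists (fun i j => if Nat.eqb i j then alpha i + tau else - beta i j). split.
    + split.
      * intros i Hi. rewrite Nat.eqb_refl. apply reg_alpha; auto.
      * intros i j Hi Hj Hij. replace (Nat.eqb i j) with false by (symmetry; apply Nat.eqb_neq; auto).
        rewrite Ropp_involutive. apply reg_beta; auto.
    + apply Pmat; auto.
Qed.


From HB Require structures.
From mathcomp Require all_boot all_order all_algebra.
From mathcomp Require Rstruct.
From mathcomp Require ring lra.
Module LA.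
Import HB.structures.
Import mathcomp.boot.all_boot mathcomp.order.all_order mathcomp.algebra.all_algebra.
Import mathcomp.reals_stdlib.Rstruct.
Import mathcomp.algebra_tactics.ring mathcomp.algebra_tactics.lra.
Import Order.TTheory GRing.Theory Num.Theory.
Local Open Scope ring_scope.

Lemma sumR_big n (g : nat -> R) : sumR n g = \sum_(i < n) g i.
Proof. elim: n => [|n IH] /=; first by rewrite big_ord0. by rewrite big_ord_recr /= IH. Qed.

Lemma pow_expr (x : R) n : pow x n = x ^+ n.
Proof. by elim: n => //= n ->; rewrite exprS. Qed.

Lemma ltb_ltn (c j : nat) : Nat.ltb c j = (c < j)%N.
Proof. case: (Nat.ltb_spec0 c j) => [/ssrnat.ltP -> //| h]; apply/esym/negbTE/negP => /ssrnat.ltP; exact h. Qed.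

Lemma det_big n (A : mat) : det n A = \det (\matrix_(i < n, j < n) A i j).
Proof.
elim: n A => [|n IH] A; first by rewrite det_mx00.
cbn [det].
rewrite (expand_det_row _ ord0) sumR_big; apply: eq_bigr => j _.
rewrite mxE /cofactor pow_expr IH add0n.
have -> : (-1)%R = -1 :> R by [].
rewrite !RmultE -mulrA mulrCA; congr (_ * (_ * \det _)).
apply/matrixP => r c; rewrite !mxE /minor /= ltb_ltn /bump.
by case: ltnP => h; rewrite ?add0n ?add1n.
Qed.
Definition sddmx {n} (A : 'M[R]_n) :=
  forall i, (\sum_(j < n | j != i) `|A i j|) < A i i.

Lemma sdd_det_neq0 n (A : 'M[R]_n) : sddmx A -> \det A != 0.
Proof.
move=> sA; apply/negP => /eqP d0.
have /det0P [v v0 vA] : \det A^T == 0 by rewrite det_tr d0.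
case: n A sA v v0 vA d0 => [|n] A sA v v0 vA d0.
  by move: v0; rewrite thinmx0 eqxx.
have [i _ imax] := @arg_maxP _ _ 'I_n.+1 ord0 xpredT (fun j => `|v 0 j|) isT.
have vipos : 0 < `|v 0 i|.
  rewrite lt_neqAle normr_ge0 andbT eq_sym; apply/negP => /eqP vi0.
  move/negP: v0; apply; apply/eqP/rowP => j; rewrite mxE.
  by apply/eqP; rewrite -normr_le0 -vi0; exact: imax.
have := congr1 (fun M : 'M[R]_(1, n.+1) => M 0 i) vA; rewrite !mxE.
under eq_bigr do rewrite mxE.
rewrite (bigD1 i) //= => /eqP.
rewrite addrC addr_eq0 => /eqP e.
have : A i i * `|v 0 i| <= (\sum_(j < n.+1 | j != i) `|A i j|) * `|v 0 i|.
  have Aii : 0 <= A i i by apply: le_trans (ltW (sA i)); apply: sumr_ge0.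
  rewrite -(ger0_norm Aii) -normrM (mulrC (A i i)) -normrN -e mulr_suml.
  apply: le_trans (ler_norm_sum _ _ _) _.
  apply: ler_sum => j _; rewrite normrM mulrC.
  by apply: ler_wpM2l; [apply: normr_ge0 | apply: imax].
by apply/negP; rewrite -ltNge ltr_pM2r // sA.
Qed.

Lemma sdd_det_pos n (A : 'M[R]_n) : sddmx A -> 0 < \det A.
Proof.
move=> sA.
pose At (t : R) := \matrix_(i < n, j < n) (if i == j then A i j else A i j * t).
have sAt : forall t, 0 <= t <= 1 -> sddmx (At t).
  move=> t /andP [t0 t1] i; rewrite mxE eqxx.
  apply: le_lt_trans (sA i).
  apply: ler_sum => j ji; rewrite mxE eq_sym (negbTE ji) normrM (ger0_norm t0).
  by apply: ler_piMr => //.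
pose P : {poly R} := \det (\matrix_(i < n, j < n)
   (if i == j then (A i j)%:P else (A i j)%:P * 'X)).
have HP : forall t, P.[t] = \det (At t).
  move=> t; rewrite -horner_evalE -det_map_mx; congr (\det _).
  apply/matrixP => i j; rewrite !mxE /=; case: (i == j).
    by rewrite horner_evalE hornerC.
  by rewrite horner_evalE hornerMX hornerC.
have P0 : 0 < P.[0].
  rewrite HP.
  have -> : At 0 = diag_mx (\row_i A i i).
    apply/matrixP => i j; rewrite !mxE; case: eqP => [->|_]; first by rewrite mulr1n.
    by rewrite mulr0 mulr0n.
  rewrite det_diag; apply: prodr_gt0 => i _; rewrite mxE.
  by apply: le_lt_trans (sA i); apply: sumr_ge0.
have P1 : P.[1] = \det A.
  rewrite HP; congr (\det _); apply/matrixP => i j; rewrite mxE.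
  by case: (i == j); rewrite ?mulr1.
rewrite -P1 ltNge; apply/negP => Ple.
have [x /andP [x0 x1] rx] : exists2 x, 0 <= x <= 1 & root (- P) x.
  apply: poly_ivt; first by rewrite ler01.
  by rewrite !hornerN oppr_le0 oppr_ge0 Ple (ltW P0).
move: rx; rewrite rootN => /rootP; rewrite HP => /eqP.
by apply/negP; apply: sdd_det_neq0; apply: sAt; rewrite x0 x1.
Qed.
Lemma discr (a b c : R) : 0 <= c -> (forall t, 0 <= a + 2 * t * b + t^+2 * c) -> b^+2 <= a * c.
Proof. move=> c0 H.
case: (ltrgtP c 0) => hc; first lra.
  have h := H (- b / c). have e : (- b / c) * c = - b by rewrite mulfVK // gt_eqF.
  nra.
rewrite hc mulr0; rewrite hc in H.
case: (eqVneq b 0) => [-> | b0]; first by rewrite expr0n.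
have h := H (- (a + 1) / 2 / b).
have e : (- (a + 1) / 2 / b) * b = - (a + 1) / 2 by rewrite mulfVK.
nra.
Qed.

Section Spec.
Variable n : nat.
Implicit Types (A T B : 'M[R]_n) (u w : 'cV[R]_n).

Definition nrm u : R := \sum_i u i 0 ^+ 2.
Definition form A u w : R := (u^T *m A *m w) 0 0.

Lemma formE A u w : form A u w = \sum_i \sum_j u i 0 * A i j * w j 0.
Proof.
rewrite /form mxE; under eq_bigr do rewrite mxE mulr_suml.
rewrite exchange_big /=; apply: eq_bigr => i _; apply: eq_bigr => j _.
by rewrite mxE.
Qed.

Lemma form1 u w : form 1%:M u w = \sum_i u i 0 * w i 0.
Proof. by rewrite /form mulmx1 mxE; apply: eq_bigr => i _; rewrite mxE. Qed.

Lemma nrm_form u : nrm u = form 1%:M u u.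
Proof. by rewrite form1 /nrm; apply: eq_bigr => i _; rewrite expr2. Qed.

Lemma nrm_ge0 u : 0 <= nrm u.
Proof. by apply: sumr_ge0 => i _; apply: sqr_ge0. Qed.

Lemma nrm_term u k : u k 0 ^+ 2 <= nrm u.
Proof.
rewrite /nrm (bigD1 k) //= lerDl; apply: sumr_ge0 => i _; apply: sqr_ge0.
Qed.

Lemma formDl A u u' w : form A (u + u') w = form A u w + form A u' w.
Proof.
rewrite !formE -big_split; apply: eq_bigr => i _; rewrite -big_split.
by apply: eq_bigr => j _; rewrite mxE !mulrDl.
Qed.

Lemma formDr A u w w' : form A u (w + w') = form A u w + form A u w'.
Proof.
rewrite !formE -big_split; apply: eq_bigr => i _; rewrite -big_split.
by apply: eq_bigr => j _; rewrite mxE !mulrDr.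
Qed.

Lemma formZl A t u w : form A (t *: u) w = t * form A u w.
Proof.
rewrite !formE mulr_sumr; apply: eq_bigr => i _; rewrite mulr_sumr.
by apply: eq_bigr => j _; rewrite mxE -!mulrA.
Qed.

Lemma formZr A t u w : form A u (t *: w) = t * form A u w.
Proof.
rewrite !formE mulr_sumr; apply: eq_bigr => i _; rewrite mulr_sumr.
by apply: eq_bigr => j _; rewrite mxE mulrCA.
Qed.

Lemma form_sym A u w : A^T = A -> form A u w = form A w u.
Proof.
move=> sA; rewrite /form.
have -> : (u^T *m A *m w) = (w^T *m A *m u)^T.
  by rewrite !trmx_mul trmxK sA mulmxA.
by rewrite mxE.
Qed.

Lemma form_CS A u w : A^T = A -> (forall v, 0 <= form A v v) ->
  form A u w ^+ 2 <= form A u u * form A w w.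
Proof.
move=> sA psd; apply: discr => [|t]; first exact: psd.
have := psd (u + t *: w).
by rewrite formDl !formDr !formZl !formZr (form_sym A w u sA) => h; lra.
Qed.

Definition Lmx A : R := \sum_i \sum_j `|A i j|.

Lemma Lmx_ge0 A : 0 <= Lmx A.
Proof. by apply: sumr_ge0 => i _; apply: sumr_ge0 => j _; apply: normr_ge0. Qed.

Lemma form_bound A u : `|form A u u| <= Lmx A * nrm u.
Proof.
rewrite formE /Lmx mulr_suml.
apply: le_trans (ler_norm_sum _ _ _) _; apply: ler_sum => i _.
rewrite mulr_suml.
apply: le_trans (ler_norm_sum _ _ _) _; apply: ler_sum => j _.
have hi := nrm_term u i; have hj := nrm_term u j.
have ha := normr_ge0 (u i 0); have hb := normr_ge0 (u j 0).
rewrite -(real_normK (num_real (u i 0))) in hi.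
rewrite -(real_normK (num_real (u j 0))) in hj.
have hab : `|u i 0| * `|u j 0| <= nrm u by nra.
rewrite !normrM -mulrA [`|A i j| * _]mulrC mulrA [X in X <= _]mulrC.
by apply: ler_wpM2l => //; apply: normr_ge0.
Qed.

Lemma nrm_mul B w : nrm (B *m w) <= (\sum_i \sum_j B i j ^+ 2) * nrm w.
Proof.
rewrite /nrm mulr_suml; apply: ler_sum => i _.
have e : (B *m w) i 0 = form 1%:M (row i B)^T w.
  by rewrite form1 mxE; apply: eq_bigr => j _; rewrite !mxE.
rewrite e.
have psd1 : forall v, 0 <= form 1%:M v v by move=> v; rewrite -nrm_form nrm_ge0.
apply: le_trans (form_CS _ _ _ (trmx1 _ _) psd1) _.
rewrite -!nrm_form.
have -> : nrm (row i B)^T = \sum_j B i j ^+ 2.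
  by rewrite /nrm; apply: eq_bigr => j _; rewrite !mxE.
exact: lexx.
Qed.

Lemma spectral_min A : (0 < n)%N -> A^T = A ->
  exists mu, (exists2 v : 'cV[R]_n, v != 0 & A *m v = mu *: v) /\
             forall u, mu * nrm u <= form A u u.
Proof.
move=> n0 sA.
pose E := fun r : R => exists u, nrm u != 0 /\ r = - (form A u u / nrm u).
have bE : bound E.
  exists (Lmx A) => r [u [nu ->]]; apply/RleP.
  have np : 0 < nrm u by rewrite lt_neqAle eq_sym nu nrm_ge0.
  have := form_bound A u; rewrite ler_norml => /andP [h1 _].
  rewrite lerNl ler_pdivlMr //; lra.
have neE : exists r, E r.
  pose i0 := Ordinal n0.
  exists (- (form A (delta_mx i0 0) (delta_mx i0 0) / nrm (delta_mx i0 0))).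
  exists (delta_mx i0 0); split => //.
  rewrite /nrm (bigD1 i0) //= big1 ?mxE ?eqxx ?addr0 ?expr1n ?oner_eq0 //.
  by move=> i ii0; rewrite mxE (negbTE ii0) /= expr0n.
have [m [ubm lubm]] := completeness E bE neE.
pose mu := - m.
have low : forall u, mu * nrm u <= form A u u.
  move=> u; case: (eqVneq (nrm u) 0) => nu.
    rewrite nu mulr0.
    have := form_bound A u; rewrite nu mulr0 normr_le0 => /eqP ->; exact: lexx.
  have np : 0 < nrm u by rewrite lt_neqAle eq_sym nu nrm_ge0.
  have /RleP h := ubm _ (ex_intro _ u (conj nu erefl)).
  rewrite -ler_pdivlMr // /mu; lra.
exists mu; split=> //.
pose T := A - mu%:M.
have sT : T^T = T by rewrite /T linearB /= sA tr_scalar_mx.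
have formT : forall u, form T u u = form A u u - mu * nrm u.
  move=> u; rewrite /T nrm_form !formE mulr_sumr -sumrB; apply: eq_bigr => i _.
  rewrite mulr_sumr -sumrB; apply: eq_bigr => j _; rewrite !mxE.
  by case: (i == j) => /=; ring.
have psdT : forall u, 0 <= form T u u by move=> u; rewrite formT subr_ge0.
case: (eqVneq (\det T) 0) => dT.
  have /det0P [v v0 vT] : \det T == 0 by rewrite dT.
  exists v^T.
    by apply: contra v0 => /eqP h; apply/eqP; rewrite -(trmxK v) h trmx0.
  have : T *m v^T = 0 by rewrite -sT -trmx_mul vT trmx0.
  by rewrite /T mulmxBl mul_scalar_mx => /eqP; rewrite subr_eq0 => /eqP.
exfalso.
have uT : T \in unitmx by rewrite unitmxE unitfE.
pose K := \sum_i \sum_j (invmx T) i j ^+ 2.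
have K0 : 0 <= K by apply: sumr_ge0 => i _; apply: sumr_ge0 => j _; apply: sqr_ge0.
have LT0 := Lmx_ge0 T.
have key : forall u, nrm u <= (K * Lmx T + 1) * form T u u.
  move=> u.
  have h1 : nrm u <= K * nrm (T *m u).
    by rewrite -{1}(mulKmx uT u); apply: nrm_mul.
  have h2 : nrm (T *m u) <= Lmx T * form T u u.
    have cs := form_CS T u (T *m u) sT psdT.
    have e1 : form T u (T *m u) = nrm (T *m u).
      by rewrite nrm_form /form mulmx1 trmx_mul sT.
    have e2 := form_bound T (T *m u).
    rewrite e1 in cs.
    have p2 := psdT (T *m u).
    have pu := psdT u.
    have nn := nrm_ge0 (T *m u).
    rewrite ger0_norm // in e2.
    case: (eqVneq (nrm (T *m u)) 0) => z; first by rewrite z; apply: mulr_ge0.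
    have np : 0 < nrm (T *m u) by rewrite lt_neqAle eq_sym z nn.
    have : nrm (T *m u) ^+ 2 <= (Lmx T * form T u u) * nrm (T *m u).
      apply: le_trans cs _; nra.
    by rewrite expr2 ler_pM2r.
  have pu := psdT u.
  have : K * nrm (T *m u) <= K * (Lmx T * form T u u) by apply: ler_wpM2l.
  nra.
pose c := (K * Lmx T + 1)^-1.
have c0 : 0 < c by rewrite invr_gt0; nra.
have ub : is_upper_bound E (m - c).
  move=> r [u [nu ->]]; apply/RleP.
  have np : 0 < nrm u by rewrite lt_neqAle eq_sym nu nrm_ge0.
  have := key u; rewrite formT => h.
  have h' : c * nrm u <= form A u u - mu * nrm u.
    rewrite -(ler_pM2l (_ : 0 < K * Lmx T + 1)); last by nra.
    by rewrite mulrA mulfV ?mul1r //; apply: lt0r_neq0; nra.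
  have fq : form A u u = (form A u u / nrm u) * nrm u by rewrite divfK.
  set q := form A u u / nrm u in fq *.
  rewrite fq /mu in h'; rewrite RminusE; nra.
have := lubm _ ub; move/RleP; rewrite RminusE; lra.
Qed.
End Spec.
Arguments nrm {n}.
Arguments form {n}.

Lemma Nateqb_eq (a b : nat) : Nat.eqb a b = (a == b).
Proof. by case: (Nat.eqb_spec a b) => [->|h]; [rewrite eqxx | apply/esym/eqP]. Qed.

Lemma sdd_det_posR n (A : mat) :
  (forall k, (k < n)%coq_nat ->
     Rlt (sumR n (fun l => if Nat.eqb l k then 0%R else Rabs (A k l))) (A k k)) ->
  Rlt 0 (det n A).
Proof.
move=> H; rewrite det_big; apply/RltP; apply: sdd_det_pos => i.
have /RltP := H i (ssrnat.ltP (ltn_ord i)).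
congr (_ < _); last by rewrite mxE.
rewrite sumR_big [in RHS]big_mkcond /=; apply: eq_bigr => j _.
rewrite Nateqb_eq -(inj_eq val_inj) /=.
by case: (nat_of_ord j == nat_of_ord i); rewrite ?mxE.
Qed.

Definition colv n (u : vec) : 'cV[R]_n := \col_(k < n) u k.

Lemma nrm_colv n u : nrm (colv n u) = vnorm2 n u.
Proof.
rewrite /vnorm2 sumR_big /nrm; apply: eq_bigr => i _; by rewrite mxE pow_expr.
Qed.

Lemma Q_form n (G : mat) u :
  sumR n (fun m => Rmult (mat_vec n G u m) (u m)) =
  form (\matrix_(k < n, l < n) G k l) (colv n u) (colv n u).
Proof.
rewrite formE sumR_big; apply: eq_bigr => i _.
rewrite /mat_vec RmultE sumR_big mulr_suml; apply: eq_bigr => j _.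
by rewrite !mxE !RmultE mulrC mulrA.
Qed.

Lemma half_sum n (X : 'I_n -> 'I_n -> R) k : (1 + 1) * k = 1 ->
  \sum_i \sum_j (X i j + X j i) * k = \sum_i \sum_j X i j.
Proof.
move=> hk; under eq_bigr do rewrite -mulr_suml.
rewrite -mulr_suml.
under eq_bigr do rewrite big_split /=.
rewrite big_split /= [X in (_ + X) * _]exchange_big /=.
move: (\sum_i \sum_j X i j) => S.
by rewrite -{1 2}[S]mulr1 -mulrDr -mulrA hk mulr1.
Qed.

Lemma half2 : (1 + 1) * Rinv 2 = 1 :> R.
Proof. exact: (Rinv_r 2 (Rgt_not_eq 2 0 Rlt_0_2)). Qed.

Lemma form_sym_part n (H : mat) (c : 'cV[R]_n) :
  form (\matrix_(k < n, l < n) sym_part H k l) c c =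
  form (\matrix_(k < n, l < n) H k l) c c.
Proof.
rewrite !formE.
under [RHS]eq_bigr do under eq_bigr do rewrite mxE.
rewrite -(@half_sum n (fun i j => c i 0 * H i j * c j 0) _ half2).
apply: eq_bigr => i _; apply: eq_bigr => j _.
by rewrite mxE /sym_part /Rdiv !RmultE !RplusE; ring.
Qed.

Lemma spectral_minR n (H : mat) : (0 < n)%coq_nat ->
  exists mu, lambda_least n H mu /\
    forall u : vec, Rle (Rmult mu (vnorm2 n u))
                        (sumR n (fun m => Rmult (mat_vec n H u m) (u m))).
Proof.
case: n H => [|n] H n0; first by case: (Nat.lt_irrefl 0 n0).
pose A := \matrix_(k < n.+1, l < n.+1) sym_part H k l.
have sA : A^T = A by apply/matrixP => k l; rewrite !mxE /sym_part Rplus_comm.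
have [mu [[v v0 Av] low]] := @spectral_min n.+1 A (ltn0Sn n) sA.
have QH : forall u, sumR n.+1 (fun m => Rmult (mat_vec n.+1 H u m) (u m))
                    = form A (colv n.+1 u) (colv n.+1 u).
  by move=> u; rewrite Q_form form_sym_part.
have QS : forall w, sumR n.+1 (fun m => Rmult (mat_vec n.+1 (sym_part H) w m) (w m))
                    = form A (colv n.+1 w) (colv n.+1 w).
  by move=> w; rewrite Q_form.
exists mu; split; last first.
  by move=> u; rewrite QH -nrm_colv; apply/RleP; exact: low.
split.
  exists (fun k => v (inord k) 0); split.
    case: (pickP (fun i => v i 0 != 0)) => [i vi|none].
      exists i; split; first by apply/ssrnat.ltP.
      by rewrite inord_val; apply/eqP.
    exfalso; move/negP: v0; apply; apply/eqP/colP => i; rewrite mxE.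
    by move/negbFE/eqP: (none i).
  move=> k /ssrnat.ltP kn.
  rewrite RmultE; have := congr1 (fun M : 'M[R]_(n.+1, 1) => M (inord k) 0) Av; rewrite !mxE => <-.
  rewrite /mat_vec sumR_big; apply: eq_bigr => j _.
  by rewrite !mxE inordK // inord_val.
move=> nu [w [[k0 [hk0 wk0]] ew]].
have np : 0 < nrm (colv n.+1 w).
  rewrite lt_neqAle nrm_ge0 andbT eq_sym; apply/eqP => z.
  have := @nrm_term n.+1 (colv n.+1 w) (inord k0); rewrite z mxE inordK; last by apply/ssrnat.ltP.
  move=> h; apply: wk0; apply/eqP; rewrite -sqrf_eq0 eq_le h sqr_ge0 //.
have e : form A (colv n.+1 w) (colv n.+1 w) = nu * nrm (colv n.+1 w).
  rewrite -QS nrm_colv /vnorm2 !sumR_big mulr_sumr; apply: eq_bigr => m _.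
  by rewrite ew; [rewrite pow_expr expr2 RmultE mulrA | apply/ssrnat.ltP].
have := low (colv n.+1 w); rewrite e ler_pM2r //; by move/RleP.
Qed.


End LA.

Theorem mainTheorem5 (I : nat) (d : nat -> nat) (Q : nat -> vec -> Prop)
    (f : nat -> prof -> R) (alpha : nat -> R) (beta : nat -> nat -> R)
    (taubar : R) :
  Assumption1 I d Q f ->
  Assumption2 I d Q f ->
  (forall i, (i < I)%nat -> alpha_min I d Q f i (alpha i)) ->
  (forall i j, (i < I)%nat -> (j < I)%nat -> i <> j ->
     beta_max I d Q f i j (beta i j)) ->
  (* taubar = max_{i<I} ( sum_{j<>i} beta_ij - alpha_i ) *)
  (forall i, (i < I)%nat ->
     sumR I (fun j => if Nat.eqb j i then 0 else beta i j) - alpha i <= taubar) ->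
  (exists i, (i < I)%nat /\
     sumR I (fun j => if Nat.eqb j i then 0 else beta i j) - alpha i = taubar) ->
  forall (y : prof) (tau : R), taubar < tau ->
    PUpsilon_NEP I d Q (reg_game d f tau y).
Proof.
  exact (main_aux LA.sdd_det_posR LA.spectral_minR I d Q f alpha beta taubar).
Qed.
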